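(* Let $(\Omega,\mathcal{F},\mathbb{P})$ be a probability space, $(E,\mathcal{E})$ a measurable space, $V\colon E\to[0,\infty]$ measurable, $Z\colon\mathbb{N}_0\times\Omega\to E$ a stochastic process, and let $\gamma_n\in[0,\infty)$, $\delta_n\in(0,\infty]$, $\Omega_n\in\mathcal{F}$, $n\in\mathbb{N}_0$, satisfy $\Omega_0=\Omega$, $\Omega_n\setminus\Omega_{n+1}\subseteq\{V(Z_n)>\delta_n\}$ and $\mathbb{E}[\mathbb{1}_{\Omega_{n+1}}V(Z_{n+1})]\le\gamma_n\,\mathbb{E}[\mathbb{1}_{\Omega_n}V(Z_n)]$ for all $n\in\mathbb{N}_0$. Then for all $n\in\mathbb{N}_0$, $p\in[1,\infty]$ and all measurable $\bar V\colon E\to[0,\infty]$ with $\bar V\le V$: $$\mathbb{E}[\mathbb{1}_{\Omega_n}V(Z_n)]\le\Big(\prod_{k=0}^{n-1}\gamma_k\Big)\mathbb{E}[V(Z_0)],\qquad \mathbb{P}[(\Omega_n)^c]\le\Big(\sum_{k=0}^{n-1}\frac{\prod_{l=0}^{k-1}\gamma_l}{\delta_k}\Big)\mathbb{E}[V(Z_0)],$$ $$\mathbb{E}[\bar V(Z_n)]\le\Big(\prod_{k=0}^{n-1}\gamma_k\Big)\mathbb{E}[V(Z_0)]+\|\bar V(Z_n)\|_{L^p(\Omega;\mathbb{R})}\Big[\Big(\sum_{k=0}^{n-1}\frac{\prod_{l=0}^{k-1}\gamma_l}{\delta_k}\Big)\mathbb{E}[V(Z_0)]\Big]^{(1-1/p)}.$$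 *)

(* Defs.v *)
From HB Require Import structures.
From mathcomp Require Import all_boot all_order all_algebra.
From mathcomp Require Import all_classical all_reals all_analysis.
From mathcomp Require Import measurable_realfun lebesgue_measure.
Set Implicit Arguments. Unset Strict Implicit. Unset Printing Implicit Defensive.

(* Main.v *)
From HB Require Import structures.
From mathcomp Require Import all_boot all_order all_algebra.
From mathcomp Require Import all_classical all_reals all_analysis.
From mathcomp Require Import measurable_realfun lebesgue_measure.
Import Order.TTheory GRing.Theory Num.Theory.
Import numFieldNormedType.Exports.
Local Open Scope classical_set_scope.
Local Open Scope ring_scope.
Local Open Scope ereal_scope.

Lemma part1 (d : measure_display) (Omega : measurableType d) (R : realType)
  (P : probability Omega R) (F : nat -> Omega -> \bar R)
  (gamma : nat -> R) (Om : nat -> set Omega)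
  (hgamma : forall n, (0 <= gamma n)%R)
  (hOm0 : Om 0%N = setT)
  (hstep : forall n,
     \int[P]_(w in Om n.+1) F n.+1 w
       <= (gamma n)%:E * \int[P]_(w in Om n) F n w) n :
  \int[P]_(w in Om n) F n w <= (\prod_(k < n) gamma k)%R%:E * \int[P]_w F 0%N w.
Proof.
elim: n => [|n IH]; first by rewrite big_ord0 mul1e hOm0.
apply: le_trans (hstep n) _.
rewrite big_ord_recr /= EFinM (muleC _ (gamma n)%:E) -muleA.
by rewrite lee_wpmul2l ?lee_fin.
Qed.
Lemma markov_step (d : measure_display) (Omega : measurableType d) (R : realType)
  (P : probability Omega R) (f : Omega -> \bar R) (hf0 : forall w, 0 <= f w)
  (hfm : measurable_fun setT f) (A D : set Omega) (mA : measurable A)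
  (mD : measurable D) (DA : D `<=` A) (dl : \bar R) (hd : 0 < dl)
  (hD : D `<=` [set w | dl < f w]) :
  P D <= dl^-1 * \int[P]_(w in A) f w.
Proof.
case: dl hd hD => [r| |] hd hD; last by [].
2:{
  have -> : D = set0 by apply/seteqP; split => // w /hD /=; rewrite ltNge leey.
  by rewrite measure0 invey mul0e. }
have r0 : (0 < r)%R by rewrite -lte_fin.
rewrite inver gt_eqF//.
have h1 : r%:E * P D <= \int[P]_(w in A) f w.
  rewrite -integral_cst//.
  have mfA : measurable_fun A f by exact: measurable_funS hfm.
  have mfD : measurable_fun D f by exact: measurable_funS hfm.
  apply: le_trans (ge0_subset_integral P mD mA mfA (fun w _ => hf0 w) DA).
  apply: ge0_le_integral => //.
  - by move=> w _; rewrite /= lee_fin ltW.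
  - by move=> w Dw; apply: ltW; exact: hD.
have -> : P D = (r^-1)%:E * (r%:E * P D).
  by rewrite muleA -EFinM mulVf ?gt_eqF// mul1e.
by rewrite lee_wpmul2l// lee_fin invr_ge0 ltW.
Qed.
Lemma compl_bound (d : measure_display) (Omega : measurableType d) (R : realType)
  (P : probability Omega R) (Om : nat -> set Omega)
  (hOm : forall n, measurable (Om n)) (hOm0 : Om 0%N = setT)
  (b : nat -> \bar R) (hb : forall k, P (Om k `\` Om k.+1) <= b k) n :
  P (~` Om n) <= \sum_(k < n) b k.
Proof.
elim: n => [|n IH]; first by rewrite big_ord0 hOm0 setCT measure0.
rewrite big_ord_recr /=.
have sub : ~` Om n.+1 `<=` ~` Om n `|` (Om n `\` Om n.+1).
  move=> w /= nw; have [h|h] := pselect (Om n w); last by left.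
  by right.
apply: le_trans (le_measure _ _ _ sub) _.
- by rewrite inE; apply: measurableC.
- by rewrite inE; apply: measurableU; [apply: measurableC|apply: measurableD].
apply: le_trans (measureU2 _ _ _) _.
- exact: measurableC.
- exact: measurableD.
by apply: leeD => //; exact: hb.
Qed.
Lemma hold_ind (d : measure_display) (Omega : measurableType d) (R : realType)
  (P : probability Omega R) (f : Omega -> \bar R) (hf0 : forall w, 0 <= f w)
  (hfm : measurable_fun setT f) (A : set Omega) (mA : measurable A)
  (p : \bar R) (hp : 1 <= p) :
  \int[P]_(w in A) f w <= Lnorm P p f * poweR (P A) (fine (1 - p^-1)).
Proof.
have mfA : measurable_fun A f by exact: measurable_funS hfm.
have [PA0|PA0] := eqVneq (P A) 0.
  rewrite null_set_integral//.
  by apply: mule_ge0; [exact: Lnorm_ge0|exact: poweR_ge0].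
have PApos : 0 < P A by rewrite lt0e PA0 measure_ge0.
have PT : 0 < P setT by rewrite probability_setT lte01.
case: p hp => [r| |] hp; last by [].
2:{ rewrite invey sube0 /= poweRe1 ?measure_ge0//.
    rewrite unlock PT -integral_cst//.
    apply: ae_ge0_le_integral => //.
    - move=> w _ /=; apply: ess_sup_inf.ess_sup_gee => //.
      by apply/nearW => x /=; exact: abse_ge0.
    apply: filterS (ess_sup_inf.ess_sup_ge P (abse \o f)) => w /= h _.
    by rewrite -(gee0_abs (hf0 w)). }
have r1 : (1 <= r)%R by rewrite -lee_fin.
have r0 : (0 < r)%R by apply: lt_le_trans r1.
have rn0 : r != 0%R by rewrite gt_eqF.
have mfr : measurable_fun setT (fun x => `|f x| `^ r).
  apply: (measurableT_comp (measurable_poweR r)).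
  exact: measurableT_comp.
have NE : Lnorm P r%:E f = (\int[P]_x (`|f x| `^ r)) `^ r^-1 by rewrite unlock.
have [r_eq1|r1'] := eqVneq r 1%R.
  subst r.
  have -> : fine (1 - (1%R : R)%:E^-1) = 0%R by rewrite inver oner_eq0 invr1 /= subrr.
  rewrite poweRe0 mule1 Lnorm1.
  apply: le_trans (ge0_subset_integral P mA measurableT (measurable_funS _ _ hfm) (fun w _ => hf0 w) (subsetT A)) _ => //.
  apply: ge0_le_integral => //=; first exact: measurableT_comp.
  by move=> w _; rewrite gee0_abs.
have r1s : (1 < r)%R by rewrite lt_neqAle eq_sym r1' r1.
have -> : fine (1 - r%:E^-1) = (1 - r^-1)%R by rewrite inver (negbTE rn0).
have s0 : (0 < 1 - r^-1)%R by rewrite subr_gt0 invf_lt1.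
have [Noo|Noo] := eqVneq (Lnorm P r%:E f) +oo.
  by rewrite Noo gt0_mulye ?leey// poweR_gt0.
set B := f @^-1` [set +oo].
have mB : measurable B by rewrite -[B]setTI; exact: hfm (emeasurable_set1 _).
have intfin : \int[P]_x (`|f x| `^ r) < +oo.
  rewrite ltey; apply: contra Noo => /eqP h.
  by rewrite NE h poweRyr// invr_neq0.
have PB0 : P B = 0.
  have h : +oo * P B <= \int[P]_x (`|f x| `^ r).
    rewrite -integral_cst//.
    apply: le_trans (ge0_subset_integral P mB measurableT (measurable_funS _ _ mfr) _ (subsetT B)) => //.
    - apply: ge0_le_integral => //.
      + by move=> w _; rewrite /= leey.
      + exact: measurable_funS mfr.
      + by move=> w /= ->; rewrite poweRyr.
    - by move=> w _; exact: poweR_ge0.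
  apply/eqP; apply: contraLR intfin => PB; rewrite -leNgt.
  by rewrite -(gt0_mulye (x := P B)) ?lt0e ?PB ?measure_ge0.
set g := fun x => fine (f x).
have mg : measurable_fun setT g.
  exact: (measurableT_comp (fine_measurable measurableT) hfm).
have step1 : \int[P]_(w in A) f w <= \int[P]_(w in A) (g w)%:E.
  rewrite -{1}(setUIDK A B) ge0_integral_setU//; last 4 first.
  - exact: measurableI.
  - exact: measurableD.
  - by rewrite setUIDK.
  - by rewrite disj_set2E; apply/eqP/seteqP; split => // w [[_ ?] [_]].
  rewrite null_set_integral//; last 2 first.
  - exact: measurable_funS mfA.
  - by apply/eqP; rewrite eq_le measure_ge0 -PB0 andbT; apply: le_measure => //; rewrite inE //; exact: measurableI.
  rewrite add0e.
  apply: le_trans (ge0_subset_integral P _ mA _ _ (@subDsetl _ A B)) => //.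
  - rewrite le_eqVlt; apply/orP; left; apply/eqP; apply: eq_integral => w; rewrite inE => -[_ Bw].
    have fw : f w != +oo by apply/eqP.
    by rewrite /g /= fineK// ge0_fin_numE ?hf0// ltey.
  - exact: measurableD.
  - by apply/measurable_EFinP; exact: measurable_funS mg.
  - by move=> w _; rewrite lee_fin /g fine_ge0.
  - exact: measurableI.
apply: le_trans step1 _.
pose q := ((1 - r^-1)^-1)%R.
have q0 : (0 < q)%R by rewrite invr_gt0.
have pq : (r^-1 + q^-1 = 1)%R by rewrite /q invrK addrC subrK.
have mI : measurable_fun setT (\1_A : Omega -> R) by exact: measurable_indic.
have H := @hoelder _ _ _ P g (\1_A)%R r q mg mI r0 q0 pq.
have step2 : \int[P]_(w in A) (g w)%:E <= Lnorm P 1 (EFin \o (g \* \1_A)%R).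
  rewrite Lnorm1 [leLHS]integral_mkcond.
  apply: ge0_le_integral => //.
  - by move=> w _; rewrite /patch; case: ifP => // _; rewrite lee_fin /g fine_ge0.
  - by apply/(measurable_restrictT _ mA); apply/measurable_EFinP; exact: measurable_funS mg.
  - by apply: measurableT_comp => //; apply/measurable_EFinP; exact: measurable_funM.
  move=> w _; rewrite /patch /= indicE; case: ifP => wA.
    by rewrite mulr1 lee_fin ger0_norm // /g fine_ge0.
  by rewrite mulr0 normr0.
have step3 : Lnorm P r%:E (EFin \o g) <= Lnorm P r%:E f.
  rewrite !unlock; apply: gt0_ler_poweR.
  - by rewrite invr_ge0 ltW.
  - by rewrite in_itv /= leey andbT; apply: integral_ge0 => w _; rewrite ?lee_fin ?powR_ge0 ?poweR_ge0.
  - by rewrite in_itv /= leey andbT; apply: integral_ge0 => w _; rewrite ?lee_fin ?powR_ge0 ?poweR_ge0.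
  apply: ge0_le_integral => //.
  all: try by move=> w _; exact: poweR_ge0.
  - apply: (measurableT_comp (measurable_poweR r)).
    by apply: measurableT_comp => //; apply/measurable_EFinP.
  move=> w _ /=; rewrite /g; have := hf0 w.
  case: (f w) => [t| |] //= t0.
  by rewrite (negbTE rn0) leey.
have step4 : Lnorm P q%:E (EFin \o \1_A) = P A `^ (1 - r^-1).
  rewrite unlock.
  have -> : (q^-1 = 1 - r^-1)%R by rewrite /q invrK.
  congr (_ `^ _).
  transitivity (\int[P]_x (\1_A x)%:E); last by rewrite integral_indic// setIT.
  apply: eq_integral => w _ /=; rewrite indicE; case: (w \in A) => /=.
    by rewrite normr1 powR1.
  by rewrite normr0 powR0// gt_eqF.
rewrite -step4; apply: le_trans step2 _; apply: le_trans H _.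
by rewrite lee_wpmul2r// Lnorm_ge0.
Qed.

Theorem proposition2p1
  (d : measure_display) (Omega : measurableType d) (R : realType)
  (P : probability Omega R)
  (dE : measure_display) (E : measurableType dE)
  (V : E -> \bar R) (hV0 : forall x, 0 <= V x) (hVm : measurable_fun setT V)
  (Z : nat -> Omega -> E) (hZ : forall n, measurable_fun setT (Z n))
  (gamma : nat -> R) (delta : nat -> \bar R) (Om : nat -> set Omega)
  (hgamma : forall n, (0 <= gamma n)%R)
  (hdelta : forall n, 0 < delta n)
  (hOm : forall n, measurable (Om n))
  (hOm0 : Om 0%N = setT)
  (hdiff : forall n, Om n `\` Om n.+1 `<=` [set w | delta n < V (Z n w)])
  (hstep : forall n,
     \int[P]_(w in Om n.+1) V (Z n.+1 w)
       <= (gamma n)%:E * \int[P]_(w in Om n) V (Z n w)) :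
  forall (n : nat) (p : \bar R), 1 <= p ->
  forall (Vb : E -> \bar R), (forall x, 0 <= Vb x) -> measurable_fun setT Vb ->
  (forall x, Vb x <= V x) ->
  let S := \sum_(k < n) ((\prod_(l < k) gamma l)%R%:E * (delta k)^-1) in
  [/\ \int[P]_(w in Om n) V (Z n w)
        <= (\prod_(k < n) gamma k)%R%:E * \int[P]_w V (Z 0%N w),
      P (~` Om n) <= S * \int[P]_w V (Z 0%N w)
    & \int[P]_w Vb (Z n w)
        <= (\prod_(k < n) gamma k)%R%:E * \int[P]_w V (Z 0%N w)
           + Lnorm P p (fun w => Vb (Z n w))
             * poweR (S * \int[P]_w V (Z 0%N w)) (fine (1 - p^-1))].
Proof.
move=> n p hp Vb hVb0 hVbm hVbV S.
set E0 := \int[P]_w V (Z 0%N w).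
have E00 : 0 <= E0 by apply: integral_ge0 => w _; exact: hV0.
have mVZ k : measurable_fun setT (fun w => V (Z k w)).
  exact: measurableT_comp hVm (hZ k).
have P1 k := @part1 _ _ _ P (fun k w => V (Z k w)) gamma Om hgamma hOm0 hstep k.
have stepk k : P (Om k `\` Om k.+1) <=
    ((\prod_(l < k) gamma l)%R%:E * (delta k)^-1) * E0.
  have := (@markov_step _ _ _ P _ (fun w => hV0 _) (mVZ k) _ _ (hOm k)
    (measurableD (hOm k) (hOm k.+1)) (@subDsetl _ _ _) _ (hdelta k) (hdiff k)).
  move/le_trans; apply.
  rewrite (muleC _ (delta k)^-1) -muleA lee_wpmul2l//.
  by rewrite inve_ge0 ltW.
have S0 : 0 <= S.
  by apply: sume_ge0 => k _; rewrite mule_ge0// ?lee_fin ?prodr_ge0// inve_ge0 ltW.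
have P2 : P (~` Om n) <= S * E0.
  rewrite /S ge0_sume_distrl; first exact: (@compl_bound _ _ _ P Om hOm hOm0 _ stepk n).
  by move=> k _; rewrite mule_ge0// ?lee_fin ?prodr_ge0// inve_ge0 ltW.
split => //.
have mVbZ : measurable_fun setT (fun w => Vb (Z n w)).
  exact: measurableT_comp hVbm (hZ n).
rewrite -(setUv (Om n)) ge0_integral_setU//; last 3 first.
- exact: measurableC.
- by rewrite setUv.
- by rewrite disj_set2E setICr.
apply: leeD.
  apply: le_trans (P1 n); apply: ge0_le_integral => //.
  - exact: measurable_funS mVbZ.
  - exact: measurable_funS (mVZ n).
apply: le_trans (@hold_ind _ _ _ P _ (fun w => hVb0 _) mVbZ _ (measurableC (hOm n)) _ hp) _.
rewrite lee_wpmul2l ?Lnorm_ge0//.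
apply: gt0_ler_poweR.
- case: p hp => [r| |] hp //; last by rewrite invey sube0.
  have r1 : (1 <= r)%R by rewrite -lee_fin.
  rewrite inver gt_eqF ?(lt_le_trans _ r1)//= subr_ge0 invf_le1//.
  exact: lt_le_trans r1.
- by rewrite in_itv /= leey andbT measure_ge0.
- by rewrite in_itv /= leey andbT mule_ge0.
- exact: P2.
Qed.
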